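(* Let $\mu$ be a partition with at most $n$ parts and let $T_\mu$ be the tableau of shape $\mu$ whose cells in the $k$-th row are all filled with the number $k$. Then $T_\mu$ is a semistandard C-tableau and $T_\mu\cdot\emptyset=\mu$. Conversely, if $J$ is a semistandard C-tableau of shape $\mu$ such that $J\cdot\emptyset$ is defined and equals a partition $\lambda$, then $\lambda=\mu$ and $J=T_\mu$. Moreover, if $\mu\neq\emptyset$, then every intermediate diagram occurring during the computation of $T_\mu\cdot\emptyset$ (after the first step) is nonempty.
   Context: Fix $n\ge1$ and the ordered alphabet $1<2<\cdots<n<\bar n<\cdots<\bar 1$, where $\bar k := 2n+1-k$ for $1\le k\le n$. For a column $J$ (a strictly increasing sequence of letters) and a letter $a\in J$, $\mathrm{pos}_J(a)$ is the position of $a$ in $J$ counted from the top, and $|J|$ is the length of $J$. A semistandard C-tableau of shape $\mu$ (a Young diagram with at most $n$ rows) is a filling of $\mu$ by letters with rows weakly increasing and columns strictly increasing, such that: (C-1) for every column $J$ and every $k\le n$ with $k,\bar k\in J$, $\mathrm{pos}_J(k)+(|J|+1-\mathrm{pos}_J(\bar k))\le k$; (C-2) for every pair of adjacent columns $L$ (left), $R$ (right) and every $1\le a\le b\le n$ with $a\in L$, $\bar a\in R$, $b,\bar b\in L\cup R$, if either $\mathrm{pos}_L(a)\le\mathrm{pos}_R(b)<\mathrm{pos}_R(\bar b)\le\mathrm{pos}_R(\bar a)$ or $\mathrm{pos}_L(a)\le\mathrm{pos}_L(b)<\mathrm{pos}_L(\bar b)\le\mathrm{pos}_R(\bar a)$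 (an $(a,b)$-configuration), then $\mathrm{pos}(b)-\mathrm{pos}(a)+\mathrm{pos}(\bar a)-\mathrm{pos}(\bar b)<b-a$. These tableaux form the crystal basis of the irreducible $Sp(2n,\mathbb{R})$-representation $V_\mu$. Action of a tableau $J$ on a partition $\lambda$ (at most $n$ parts): read the columns of $J$ from the rightmost to the leftmost, each column from top to bottom; a letter $k\le n$ adds one cell to row $k$, a letter $\bar k$ removes one cell from row $k$; if at any step the result is not a Young diagram (partition with at most $n$ rows), the action is undefined. If all steps succeed with final diagram $\nu$, we write $J\cdot\lambda=\nu$. $\emptyset$ denotes the empty partition (trivial representation). *)

(* Defs.v *)
From mathcomp Require Import all_boot.
Set Implicit Arguments. Unset Strict Implicit. Unset Printing Implicit Defensive.

(* Letters of the alphabet 1 < 2 < ... < n < bar n < ... < bar 1 are encoded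
   as the naturals 1..2n, with bar k = 2n+1-k (as in the paper). *)
Definition bar (n k : nat) : nat := (2 * n).+1 - k.

(* A partition with at most n parts: a weakly decreasing sequence of exactly
   n naturals (padded with zeros). The empty partition is nseq n 0. *)
Definition is_part (n : nat) (mu : seq nat) : bool :=
  (size mu == n) && sorted geq mu.

Definition empty_part (n : nat) : seq nat := nseq n 0.

(* A tableau is the list of its columns from left to right, each column read
   from top to bottom. *)
Definition tableau := seq (seq nat).

Definition colsize (mu : seq nat) (j : nat) : nat := count (fun m => j < m) mu.

Definition has_shape (mu : seq nat) (T : tableau) : Prop :=
  size T = head 0 mu /\ forall j, j < size T -> size (nth [::] T j) = colsize mu j.

Definition pos (J : seq nat) (a : nat) : nat := (index a J).+1.

Definition semistandard (n : nat) (mu : seq nat) (T : tableau) : Prop :=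
  has_shape mu T /\
  (forall J, J \in T -> forall x, x \in J -> 1 <= x <= 2 * n) /\
  (forall J, J \in T -> sorted ltn J) /\
  (forall j, j.+1 < size T -> forall i, i < size (nth [::] T j.+1) ->
      nth 0 (nth [::] T j) i <= nth 0 (nth [::] T j.+1) i).

Definition C1 (n : nat) (T : tableau) : Prop :=
  forall J, J \in T -> forall k, 1 <= k <= n -> k \in J -> bar n k \in J ->
    pos J k + ((size J).+1 - pos J (bar n k)) <= k.

(* (C-2); the inequality pos(b)-pos(a)+pos(bar a)-pos(bar b) < b-a is written
   with all terms moved to have nonnegative sides (equivalent over Z). *)
Definition C2 (n : nat) (T : tableau) : Prop :=
  forall j, j.+1 < size T ->
  let L := nth [::] T j in let R := nth [::] T j.+1 in
  forall a b, 1 <= a -> a <= b -> b <= n -> a \in L -> bar n a \in R ->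
    (b \in R -> bar n b \in R ->
       pos L a <= pos R b -> pos R b < pos R (bar n b) ->
       pos R (bar n b) <= pos R (bar n a) ->
       pos R b + pos R (bar n a) + a < b + pos L a + pos R (bar n b)) /\
    (b \in L -> bar n b \in L ->
       pos L a <= pos L b -> pos L b < pos L (bar n b) ->
       pos L (bar n b) <= pos R (bar n a) ->
       pos L b + pos R (bar n a) + a < b + pos L a + pos L (bar n b)).

Definition C_tableau (n : nat) (mu : seq nat) (T : tableau) : Prop :=
  semistandard n mu T /\ C1 n T /\ C2 n T.

Definition Tmu (mu : seq nat) : tableau :=
  mkseq (fun j => iota 1 (colsize mu j)) (head 0 mu).

Definition act_letter (n : nat) (x : nat) (lam : seq nat) : option (seq nat) :=
  let res :=
    if (1 <= x <= n) then
      Some (set_nth 0 lam x.-1 (nth 0 lam x.-1).+1)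
    else if (n < x <= 2 * n) then
      let k := bar n x in
      if nth 0 lam k.-1 == 0 then None
      else Some (set_nth 0 lam k.-1 (nth 0 lam k.-1).-1)
    else None in
  match res with
  | Some nu => if is_part n nu then Some nu else None
  | None => None
  end.

Definition act_word (n : nat) (w : seq nat) (lam : seq nat) : option (seq nat) :=
  foldl (fun o x => match o with Some l => act_letter n x l | None => None end)
        (Some lam) w.

Definition reading (T : tableau) : seq nat := flatten (rev T).

Definition act (n : nat) (T : tableau) (lam : seq nat) : option (seq nat) :=
  act_word n (reading T) lam.

(* Main.v *)
Require Import Defs.
From mathcomp Require Import all_boot zify.
Set Implicit Arguments. Unset Strict Implicit.

Definition actw n (w : seq nat) (o : option (seq nat)) :=
  foldl (fun o x => match o with Some l => act_letter n x l | None => None end) o w.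

Lemma actw_None n w : actw n w None = None.
Proof. by elim: w. Qed.

Lemma actw_Some n w l : actw n w (Some l) = act_word n w l.
Proof. by []. Qed.

Lemma act_word_cat n s1 s2 lam :
  act_word n (s1 ++ s2) lam = actw n s2 (act_word n s1 lam).
Proof. by rewrite /act_word foldl_cat. Qed.

Lemma act_word_prefix n s1 s2 lam nu :
  act_word n (s1 ++ s2) lam = Some nu -> exists mid, act_word n s1 lam = Some mid.
Proof.
rewrite act_word_cat; case: (act_word n s1 lam) => [m|]; first by eauto.
by rewrite actw_None.
Qed.

Lemma act_word_cons n x w lam :
  act_word n (x :: w) lam =
  match act_letter n x lam with Some l => act_word n w l | None => None end.
Proof.
rewrite /act_word /=; case: (act_letter n x lam) => // ; exact: actw_None.
Qed.

Lemma act_letter_part n x lam nu : act_letter n x lam = Some nu -> is_part n nu.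
Proof.
rewrite /act_letter.
case: ifP => _; first by case: ifP => // hp [<-].
case: ifP => _ //; case: ifP => _ //.
by case: ifP => // hp [<-].
Qed.

Lemma act_word_part n w lam nu : is_part n lam -> act_word n w lam = Some nu -> is_part n nu.
Proof.
elim: w lam => [|x w IH] lam hl; first by move=> [<-].
rewrite act_word_cons; case E: act_letter => [l|] //.
apply: IH; exact: act_letter_part E.
Qed.

Lemma act_letter_inv n x lam nu : act_letter n x lam = Some nu ->
  (1 <= x <= n /\ nu = set_nth 0 lam x.-1 (nth 0 lam x.-1).+1 /\ is_part n nu) \/
  (n < x <= 2 * n /\ nth 0 lam (bar n x).-1 != 0).
Proof.
rewrite /act_letter.
case: ifP => h1.
  by case: ifP => // hp [<-]; left.
case: ifP => h2 //.
case: ifP => h3 //.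
case: ifP => // _ _; right; by [].
Qed.

Lemma part_nth n l k : is_part n l -> k.+1 < n -> nth 0 l k.+1 <= nth 0 l k.
Proof.
case/andP=> /eqP hs hso hk.
by move/sortedP: hso => /(_ 0 k); rewrite hs => /(_ hk).
Qed.

Lemma part_of_nth n l : size l = n -> (forall k, k.+1 < n -> nth 0 l k.+1 <= nth 0 l k) -> is_part n l.
Proof.
move=> hs h; apply/andP; split; first by rewrite hs.
apply/(sortedP 0) => i; rewrite hs; exact: h.
Qed.

Definition addpref n c (l : seq nat) := mkseq (fun k => nth 0 l k + (k < c)) n.

Lemma addpref_part n c l : is_part n l -> is_part n (addpref n c l).
Proof.
move=> hl; apply: part_of_nth; first by rewrite size_mkseq.
move=> k hk; rewrite !nth_mkseq //; last by lia.
have := part_nth hl hk.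
case: (ltnP k.+1 c) => h1; case: (ltnP k c) => h2 /=; lia.
Qed.

Lemma act_iota n c l : is_part n l -> c <= n ->
  act_word n (iota 1 c) l = Some (addpref n c l).
Proof.
move=> hl; elim: c => [|c IH] hc.
  congr Some; apply: (@eq_from_nth _ 0).
    by case/andP: hl => /eqP ->; rewrite size_mkseq.
  case/andP: hl => /eqP -> _ i hi; rewrite nth_mkseq //; lia.
rewrite -[c.+1]addn1 iotaD act_word_cat IH; last by lia.
rewrite /= /act_letter.
have h1 : (1 <= 1 + c <= n) by lia.
rewrite h1 /= .
have -> : set_nth 0 (addpref n c l) c (nth 0 (addpref n c l) c).+1 = addpref n (c + 1) l.
  have hs : size l = n by case/andP: hl => /eqP.
  apply: (@eq_from_nth _ 0).
    rewrite size_set_nth !size_mkseq; lia.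
  move=> i; rewrite size_set_nth size_mkseq => hi.
  rewrite nth_set_nth /= !nth_mkseq; try lia.
  case: eqP => [->|hne]; first by rewrite ltnn addn1 ltnSn /= addn0 addn1.
  case: (ltnP i c) => h; case: (ltnP i (c+1)) => h'; lia.
by rewrite addpref_part.
Qed.

Lemma part_size n l : is_part n l -> size l = n.
Proof. by case/andP => /eqP. Qed.

Lemma act_cols n cs l : is_part n l -> all (fun c => c <= n) cs ->
  act_word n (flatten (rev (map (iota 1) cs))) l =
  Some (mkseq (fun k => nth 0 l k + count (fun c => k < c) cs) n).
Proof.
elim: cs => [|c cs IH] hl /=.
  move=> _; congr Some; apply: (@eq_from_nth _ 0) => [|i hi]; rewrite ?size_mkseq ?(part_size hl) //.
  by rewrite nth_mkseq ?addn0 // -(part_size hl).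
case/andP => hc hcs.
rewrite rev_cons flatten_rcons act_word_cat IH //=.
have hp : is_part n (mkseq (fun k => nth 0 l k + count (fun c => k < c) cs) n).
  exact: (act_word_part hl (IH hl hcs)).
rewrite actw_Some act_iota //; congr Some; apply: (@eq_from_nth _ 0) => [|i hi]; rewrite ?size_mkseq //.
rewrite size_mkseq in hi; rewrite !nth_mkseq //.
case: (ltnP i c) => h /=; lia.
Qed.

Definition csz (mu : seq nat) := map (colsize mu) (iota 0 (head 0 mu)).

Lemma Tmu_E mu : Tmu mu = map (iota 1) (csz mu).
Proof. by rewrite /Tmu /mkseq /csz -map_comp. Qed.

Lemma empty_is_part n : is_part n (empty_part n).
Proof.
apply: part_of_nth; first by rewrite size_nseq.
by move=> k hk; rewrite !nth_nseq; case: ifP; case: ifP.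
Qed.

Lemma colsize_le n mu j : is_part n mu -> colsize mu j <= n.
Proof. by move=> h; rewrite -(part_size h) count_size. Qed.

Lemma csz_le n mu : is_part n mu -> all (fun c => c <= n) (csz mu).
Proof. by move=> h; apply/allP => c /mapP [j _ ->]; apply: colsize_le h. Qed.

Lemma count_gt0 (s : seq nat) x j : all (fun y => y <= x) s -> x <= j ->
  count (fun y => j < y) s = 0.
Proof.
elim: s => //= y s IH /andP[hy hs] hxj; rewrite IH //.
by have -> : (j < y) = false by apply/negbTE; rewrite -leqNgt (leq_trans hy hxj).
Qed.

Lemma conj_sorted (s : seq nat) k j : sorted geq s -> k < size s ->
  (k < count (fun x => j < x) s) = (j < nth 0 s k).
Proof.
elim: s k => [|x s IH] k //= hs hk.
have hall : all (fun y => y <= x) s.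
  exact: (order_path_min (fun a b c h1 h2 => leq_trans h2 h1) hs).
have hs' : sorted geq s := path_sorted hs.
case hjx: (j < x) => /=.
  case: k hk => [|k] hk /=; first by rewrite hjx.
  by rewrite add1n ltnS IH.
rewrite add0n (count_gt0 hall); last by rewrite leqNgt hjx.
case: k hk => [|k] hk /=; first by rewrite hjx.
apply/esym/negbTE; rewrite -leqNgt.
have : nth 0 s k <= x.
  case: (ltnP k (size s)) => hks; last by rewrite nth_default.
  by move/allP: hall; apply; rewrite mem_nth.
move=> h; apply: (leq_trans h); by rewrite leqNgt hjx.
Qed.

Lemma count_iota_lt a m : count (fun j => j < a) (iota 0 m) = minn a m.
Proof.
elim: m => [|m IH]; first by rewrite minn0.
rewrite -addn1 iotaD count_cat IH /= add0n; case: ltnP => h /=; lia.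
Qed.

Lemma count_csz n mu k : is_part n mu -> k < n ->
  count (fun c => k < c) (csz mu) = nth 0 mu k.
Proof.
move=> hmu hk; rewrite /csz count_map.
have hs := part_size hmu.
have hso : sorted geq mu by case/andP: hmu.
rewrite (eq_count (a2 := fun j => j < nth 0 mu k)); last first.
  by move=> j /=; rewrite /colsize conj_sorted // hs.
rewrite count_iota_lt; apply/minn_idPl.
move: hs hso; clear hmu; case: mu => [|x s] hs hso /=; first by rewrite nth_nil.
case: k hk => [|k] hk //=.
case: (ltnP k (size s)) => hks; last by rewrite nth_default.
have := order_path_min (fun a b c h1 h2 => leq_trans h2 h1) hso.
by move/allP; apply; rewrite mem_nth.
Qed.

Lemma act_Tmu n mu : is_part n mu -> act n (Tmu mu) (empty_part n) = Some mu.
Proof.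
move=> hmu; rewrite /act /reading Tmu_E act_cols ?csz_le ?empty_is_part //.
congr Some; apply: (@eq_from_nth _ 0) => [|i hi]; rewrite ?size_mkseq ?(part_size hmu) //.
rewrite size_mkseq in hi.
by rewrite nth_mkseq // nth_nseq hi add0n (count_csz hmu).
Qed.

Lemma size_Tmu mu : size (Tmu mu) = head 0 mu.
Proof. by rewrite size_mkseq. Qed.

Lemma nth_Tmu mu j : j < head 0 mu -> nth [::] (Tmu mu) j = iota 1 (colsize mu j).
Proof. by move=> h; rewrite nth_mkseq. Qed.

Lemma mem_Tmu n mu J : is_part n mu -> J \in Tmu mu -> exists c, J = iota 1 c /\ c <= n.
Proof.
move=> hmu; rewrite Tmu_E => /mapP [c hc ->]; exists c; split => //.
by move/allP: (csz_le hmu); apply.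
Qed.

Lemma colsize_anti mu j : colsize mu j.+1 <= colsize mu j.
Proof. by apply: sub_count => x /= h; apply: ltnW. Qed.

Lemma Tmu_C n mu : is_part n mu -> C_tableau n mu (Tmu mu).
Proof.
move=> hmu; split; [split; [|split; [|split]] | split].
- split; first by rewrite size_Tmu.
  by move=> j; rewrite size_Tmu => hj; rewrite nth_Tmu // size_iota.
- move=> J /(mem_Tmu hmu) [c [-> hc]] x; rewrite mem_iota; lia.
- by move=> J /(mem_Tmu hmu) [c [-> hc]]; apply: iota_ltn_sorted.
- move=> j; rewrite size_Tmu => hj i.
  rewrite !nth_Tmu //; try lia.
  rewrite size_iota => hi.
  have := colsize_anti mu j => hh.
  by rewrite !nth_iota //; apply: leq_trans hh.
- move=> J /(mem_Tmu hmu) [c [-> hc]] k hk _; rewrite mem_iota /bar; lia.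
- move=> j; rewrite size_Tmu => hj /= a b ha hab hb _.
  rewrite nth_Tmu // mem_iota /bar => hbar.
  have := colsize_le j.+1 hmu; lia.
Qed.

Lemma col_lemma n (C lam nu : seq nat) d :
  is_part n lam -> size C <= n -> sorted ltn C -> all (fun x => 0 < x) C ->
  (forall k, 1 <= k <= n -> k \in C -> bar n k \in C ->
     pos C k + ((size C).+1 - pos C (bar n k)) <= k) ->
  (forall i, i < d -> i < size C -> nth 0 C i <= i.+1) ->
  (forall k, d <= k -> nth 0 lam k = 0) ->
  act_word n C lam = Some nu -> C = iota 1 (size C).
Proof.
move=> hl hsz hso hpos hC1 hrow hz hact.
have huniq : uniq C := sorted_uniq ltn_trans ltnn hso.
suff H : forall i, i <= size C -> take i C = iota 1 i.
  by rewrite -{1}(take_size C) H.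
elim=> [|i IH] hi; first by rewrite take0.
have hiC : i < size C by [].
have IHi := IH (ltnW hi).
set x := nth 0 C i.
have hxC : x \in C by rewrite mem_nth.
have hx_ge : i.+1 <= x.
  case: i {IH} hi hiC IHi @x hxC => [|i] hi hiC IHi x hxC.
    by move/allP: hpos; apply.
  have h1 := sorted_ltn_nth ltn_trans 0 hso.
  have h2 : nth 0 C i < nth 0 C i.+1 by apply: h1; rewrite ?inE /=; lia.
  have h3 : nth 0 C i = i.+1.
    by rewrite -(nth_take 0 (ltnSn i)) IHi nth_iota.
  by rewrite h3 in h2.
have htk : take i.+1 C = rcons (iota 1 i) x by rewrite (take_nth 0 hiC) IHi.
have E : iota 1 i.+1 = rcons (iota 1 i) i.+1.
  by rewrite -cats1 -[in LHS](addn1 i) iotaD add1n.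
suff hx : x = i.+1 by rewrite htk hx E.
have [mid hmid] : exists mid, act_word n (take i.+1 C) lam = Some mid.
  apply: (@act_word_prefix _ _ (drop i.+1 C) _ nu); by rewrite cat_take_drop.
rewrite htk -cats1 act_word_cat act_iota //= in hmid; last by lia.
case: (ltnP i d) => hid.
  by apply/eqP; rewrite eqn_leq hx_ge andbT; apply: hrow.
case/act_letter_inv: hmid => [[hx1 [hm hp]] | [hx1 hx2]].
  apply/eqP; rewrite eqn_leq hx_ge andbT leqNgt; apply/negP => hgt.
  have hs := part_size hl.
  have := part_nth hp (k := x.-2); rewrite hm !nth_set_nth /=.
  have -> : (x.-2).+1 = x.-1 by lia.
  rewrite eqxx.
  have -> : (x.-2 == x.-1) = false by apply/negbTE; lia.
  rewrite /addpref !nth_mkseq; try lia.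
  rewrite hz; last by lia.
  have -> : (x.-2 < i) = false by apply/negbTE; lia.
  move=> h; have := h ltac:(lia); rewrite hz; last by lia.
  by rewrite addn0 ltn0.
exfalso.
set k := bar n x in hx2.
have hk1 : 1 <= k <= n by rewrite /k /bar; lia.
move: hx2; rewrite /addpref nth_mkseq; last by lia.
case: (ltnP k.-1 i) => hki; last first.
  by rewrite hz ?addn0 //; lia.
move=> _.
have hnk : nth 0 C k.-1 = k.
  rewrite -(nth_take 0 hki) IHi nth_iota //; lia.
have hkC : k \in C.
  rewrite -hnk; apply: mem_nth; exact: (ltn_trans hki hiC).
have hbk : bar n k = x by rewrite /k /bar; lia.
have := hC1 k hk1 hkC; rewrite hbk => /(_ hxC).
rewrite /pos -{1}hnk index_uniq //; last exact: (ltn_trans hki hiC).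
have := hxC; rewrite -index_mem => hix.
clearbody k x; move: hix hk1; set s := size C; set t := index x C; clear; lia.
Qed.

Lemma colsize_anti2 mu j1 j2 : j1 <= j2 -> colsize mu j2 <= colsize mu j1.
Proof. by move=> h; apply: sub_count => x /= h2; apply: leq_ltn_trans h2. Qed.

Lemma size_csz mu : size (csz mu) = head 0 mu.
Proof. by rewrite size_map size_iota. Qed.

Lemma nth_csz mu j : j < head 0 mu -> nth 0 (csz mu) j = colsize mu j.
Proof. by move=> h; rewrite (nth_map 0) ?size_iota // nth_iota. Qed.

Lemma drop_csz mu j : drop j (csz mu) = map (colsize mu) (iota j (head 0 mu - j)).
Proof. by rewrite /csz -map_drop drop_iota. Qed.

Lemma converse n mu J lam : is_part n mu -> C_tableau n mu J ->
  act n J (empty_part n) = Some lam -> J = Tmu mu.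
Proof.
move=> hmu [[[hsize hcols] [hent [hsort hrow]]] [hC1 _]] hact.
set m := head 0 mu in hsize.
have P : forall r j, j < m -> m - j <= r -> nth [::] J j = iota 1 (colsize mu j).
  elim=> [|r IH] j hj hr; first by lia.
  case: (leqP (m - j) r) => hr'; first exact: IH.
  have IHj : forall j', j < j' -> j' < m -> nth [::] J j' = iota 1 (colsize mu j').
    by move=> j' h1 h2; apply: IH => //; lia.
  set a := nth [::] J j.
  have hdrop : drop j.+1 J = map (iota 1) (drop j.+1 (csz mu)).
    apply: (@eq_from_nth _ [::]) => [|i hi].
      by rewrite size_map !size_drop size_csz hsize.
    rewrite size_drop hsize in hi.
    rewrite nth_drop (nth_map 0); last by rewrite size_drop size_csz.
    rewrite nth_drop nth_csz; last by lia.
    by apply: IHj; lia.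
  have hJ : J = take j J ++ a :: drop j.+1 J.
    by rewrite -drop_nth ?cat_take_drop // hsize.
  have hread : reading J = (flatten (rev (drop j.+1 J)) ++ a) ++ flatten (rev (take j J)).
    by rewrite /reading {1}hJ rev_cat rev_cons flatten_cat flatten_rcons.
  have hact' : act_word n ((flatten (rev (drop j.+1 J)) ++ a) ++ flatten (rev (take j J))) (empty_part n) = Some lam.
    by rewrite -hread.
  have [mid hmid] := act_word_prefix hact'.
  have hall : all (fun c => c <= n) (drop j.+1 (csz mu)).
    by apply/allP => c /mem_drop; move/allP: (csz_le hmu); apply.
  have hst := act_cols (empty_is_part n) hall.
  rewrite act_word_cat hdrop hst actw_Some in hmid.
  set st := mkseq _ n in hmid hst.
  have hja : j < size J by rewrite hsize.
  have haJ : a \in J by rewrite mem_nth.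
  have hsa : size a = colsize mu j := hcols j hja.
  rewrite -hsa.
  apply: (col_lemma (n := n) (lam := st) (nu := mid) (d := nth 0 (csz mu) j.+1)) => //.
  - exact: (act_word_part (empty_is_part n) hst).
  - by rewrite hsa colsize_le.
  - exact: hsort.
  - by apply/allP => x hx; have := hent a haJ x hx; lia.
  - exact: hC1.
  - move=> i hid hia.
    case: (ltnP j.+1 m) => hj1; last by rewrite nth_default ?size_csz in hid.
    rewrite nth_csz // in hid.
    have := hrow j ltac:(rewrite hsize; lia) i.
    rewrite (IHj j.+1) //; rewrite size_iota nth_iota //.
    by move=> /(_ hid); rewrite add1n.
  - move=> k hk.
    case: (ltnP k n) => hkn; last by rewrite nth_default // size_mkseq.
    rewrite /st nth_mkseq // nth_nseq hkn add0n.
    apply: (count_gt0 (x := k)) => //.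
    apply/allP => c; rewrite drop_csz => /mapP [i hi ->].
    rewrite mem_iota in hi.
    case: (ltnP j.+1 m) => hj1; last by lia.
    rewrite nth_csz // in hk.
    apply: leq_trans hk; apply: colsize_anti2; lia.
apply: (@eq_from_nth _ [::]) => [|j hj]; first by rewrite size_Tmu.
rewrite hsize in hj; rewrite nth_Tmu // (P (m - j)) //.
Qed.

Lemma act_sum n w lam nu : act_word n w lam = Some nu ->
  all (fun x => 1 <= x <= n) w -> sumn nu = sumn lam + size w.
Proof.
elim: w lam => [|x w IH] lam /=; first by move=> [<-]; rewrite addn0.
rewrite act_word_cons; case E: act_letter => [l|] // hw /andP [hx hall].
rewrite (IH l hw hall).
case/act_letter_inv: E => [[_ [-> _]] | [h _]]; last by lia.
rewrite sumn_set_nth0; lia.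
Qed.

Lemma reading_Tmu_letters n mu : is_part n mu ->
  all (fun x => 1 <= x <= n) (reading (Tmu mu)).
Proof.
move=> hmu; apply/allP => x /flattenP [J]; rewrite mem_rev => /(mem_Tmu hmu) [c [-> hc]].
rewrite mem_iota; lia.
Qed.

Unset Implicit Arguments.

Theorem proposition3p3 (n : nat) (hn : 1 <= n) (mu : seq nat) (hmu : is_part n mu) :
  (C_tableau n mu (Tmu mu) /\ act n (Tmu mu) (empty_part n) = Some mu) /\
  (forall (J : tableau) (lam : seq nat), C_tableau n mu J ->
     act n J (empty_part n) = Some lam -> lam = mu /\ J = Tmu mu) /\
  (mu <> empty_part n ->
     forall i, 1 <= i <= size (reading (Tmu mu)) ->
       exists nu, act_word n (take i (reading (Tmu mu))) (empty_part n) = Some nu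
                  /\ nu <> empty_part n).
Proof.
split; first by split; [exact: Tmu_C | exact: act_Tmu].
split.
  move=> J lam hJ hact.
  have hJT := converse hmu hJ hact.
  split => //.
  by move: hact; rewrite hJT act_Tmu // => -[].
move=> _ i hi.
have hw : act_word n (take i (reading (Tmu mu)) ++ drop i (reading (Tmu mu))) (empty_part n) = Some mu.
  by rewrite cat_take_drop; exact: act_Tmu.
have [nu hnu] := act_word_prefix hw.
exists nu; split => //.
have hs := act_sum hnu.
move=> hne; rewrite hne in hs.
have hall : all (fun x => 1 <= x <= n) (take i (reading (Tmu mu))).
  apply/allP => x /mem_take; exact: (allP (reading_Tmu_letters hmu)).
move: (hs hall); rewrite size_take; case: ifP => h; lia.
Qed.
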